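(* Let $\Sigma$ be a set of prime numbers, $S$ the multiplicative submonoid of $\mathbb{N}$ generated by $\Sigma$, and $\mathbb{Z}[S^{-1}]\subset\mathbb{Q}$ the corresponding localization. Let $M$ be a locally compact topological $\mathbb{Z}[S^{-1}]$-module. Then $M$ is compactly generated if and only if its Pontryagin dual $\widehat{M}$ has the no small submodules property.
   Context: All topological modules are Hausdorff; $\mathbb{Z}[S^{-1}]$ is discrete; a locally compact topological $\mathbb{Z}[S^{-1}]$-module is a locally compact abelian group with a $\mathbb{Z}[S^{-1}]$-module structure with continuous scalar multiplication. $M$ is compactly generated if it is the submodule generated by some compact subset. $\widehat{M}$ is the group of continuous homomorphisms $M\to\mathbb{S}^1$ with the compact-open topology, a topological $\mathbb{Z}[S^{-1}]$-module via $\chi^r(m)=\chi(rm)$. A topological module has the no small submodules property if some neighbourhood of $0$ contains no nonzero submodule. *)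

(* Defs.v *)
From HB Require Import structures.
From mathcomp Require Import all_boot all_order all_algebra.
From mathcomp Require Import boolp classical_sets functions reals.
From mathcomp Require Import topology.
From mathcomp Require Import Rstruct.
From mathcomp Require Import ring lra.

Set Implicit Arguments.
Unset Strict Implicit.
Unset Printing Implicit Defensive.

Import Order.TTheory GRing.Theory Num.Theory.
Import numFieldTopology.Exports.
Local Open Scope classical_set_scope.
Local Open Scope ring_scope.

(** [in_S Sigma s]: s lies in the multiplicative submonoid of N generated by
    the set of primes Sigma (the primality condition is redundant under the
    standing hypothesis that Sigma consists of primes). *)
Inductive in_S (Sigma : set nat) : nat -> Prop :=
  | in_S1 : in_S Sigma 1
  | in_SM p n : Sigma p -> prime p -> in_S Sigma n -> in_S Sigma (p * n)%N.

Definition ZSinv (Sigma : set nat) (q : rat) : Prop :=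
  exists (a : int) (s : nat), in_S Sigma s /\ q = a%:~R / s%:R.

Definition ZSinvb (Sigma : set nat) : {pred rat} := fun q => `[< ZSinv Sigma q >].

Lemma in_S_gt0 Sigma s : in_S Sigma s -> (0 < s)%N.
Proof.
elim=> // p n _ pp _ IH; rewrite muln_gt0 IH andbT; exact: prime_gt0.
Qed.

Lemma in_S_mul Sigma s t : in_S Sigma s -> in_S Sigma t -> in_S Sigma (s * t)%N.
Proof.
elim=> [|p n Sp pp _ IH] Ht; first by rewrite mul1n.
by rewrite -mulnA; apply: in_SM => //; exact: IH.
Qed.

Lemma ZSinvb_subring_closed Sigma : subring_closed (ZSinvb Sigma).
Proof.
split.
- rewrite inE /ZSinv; exists 1, 1%N; split; first by constructor.
  by rewrite divr1.
- move=> x y Hx Hy.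
  have [a [s [Hs ->]]] : ZSinv Sigma x by move: Hx; rewrite inE.
  have [b [t [Ht ->]]] : ZSinv Sigma y by move: Hy; rewrite inE.
  rewrite inE /ZSinv; exists (a * t%:Z - b * s%:Z), (s * t)%N; split.
    exact: in_S_mul.
  have s0 : (s%:R : rat) != 0 by rewrite pnatr_eq0 -lt0n (in_S_gt0 Hs).
  have t0 : (t%:R : rat) != 0 by rewrite pnatr_eq0 -lt0n (in_S_gt0 Ht).
  rewrite natrM rmorphB !rmorphM /= -!pmulrn.
  by field; rewrite s0 t0.
- move=> x y Hx Hy.
  have [a [s [Hs ->]]] : ZSinv Sigma x by move: Hx; rewrite inE.
  have [b [t [Ht ->]]] : ZSinv Sigma y by move: Hy; rewrite inE.
  rewrite inE /ZSinv; exists (a * b), (s * t)%N; split.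
    exact: in_S_mul.
  have s0 : (s%:R : rat) != 0 by rewrite pnatr_eq0 -lt0n (in_S_gt0 Hs).
  have t0 : (t%:R : rat) != 0 by rewrite pnatr_eq0 -lt0n (in_S_gt0 Ht).
  rewrite natrM rmorphM /=.
  by field; rewrite s0 t0.
Qed.

HB.instance Definition _ Sigma :=
  GRing.isSubringClosed.Build rat (ZSinvb Sigma) (ZSinvb_subring_closed Sigma).

Definition ZS (Sigma : set nat) := {q : rat | q \in ZSinvb Sigma}.

HB.instance Definition _ Sigma := [isSub for (@sval rat (fun q => q \in ZSinvb Sigma)) : ZS Sigma -> rat].
HB.instance Definition _ Sigma := [Choice of ZS Sigma by <:].
HB.instance Definition _ Sigma := [SubChoice_isSubComNzRing of ZS Sigma by <:].

(** Continuity of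
    addition, negation and of the scalar multiplication (w.r.t. the discrete
    topology on the ring) are imposed as hypotheses in the theorem
    (see [is_topological_module]). *)
#[short(type="topLmodType")]
HB.structure Definition TopLmodule (R : pzRingType) :=
  {M of Topological M & GRing.Lmodule R M}.

Definition is_topological_module (R : pzRingType) (M : topLmodType R) : Prop :=
  [/\ continuous (fun x : M * M => x.1 + x.2),
      continuous (fun x : M => - x) &
      forall r : R, continuous (fun x : M => r *: x)].

Section Modules.
Context (R : pzRingType) (M : lmodType R).

Definition is_submodule (N : set M) : Prop :=
  [/\ N 0,
      (forall x y, N x -> N y -> N (x + y)) &
      (forall (r : R) x, N x -> N (r *: x))].

Definition generated_submodule (K : set M) : set M :=
  \bigcap_(N in [set N | is_submodule N /\ K `<=` N]) N.

End Modules.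

Definition compactly_generated (R : pzRingType) (M : topLmodType R) : Prop :=
  exists K : set M, compact K /\ generated_submodule K = [set: M].

Definition RR : realType := Rdefinitions.R.

(** The circle group S^1, realised as the unit circle in R x R = C
    (with the product topology), with complex multiplication. *)
Definition circle : set (RR * RR) :=
  [set z | z.1 ^+ 2 + z.2 ^+ 2 = 1].

Definition cmul (z w : RR * RR)
  : RR * RR :=
  (z.1 * w.1 - z.2 * w.2, z.1 * w.2 + z.2 * w.1).

Section Dual.
Context (R : pzRingType) (M : topLmodType R).

Definition co_space := {compact-open, M -> (RR * RR)%type}.

Definition is_character (chi : co_space) : Prop :=
  [/\ continuous (chi : M -> RR * RR),
      (forall m, circle (chi m)) &
      (forall a b, chi (a + b) = cmul (chi a) (chi b))].

Definition dual : set co_space := is_character.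

Definition dual_zero : co_space := fun _ => (1, 0).
Definition dual_add (chi psi : co_space) : co_space := fun m => cmul (chi m) (psi m).
Definition dual_scale (r : R) (chi : co_space) : co_space := fun m => chi (r *: m).

Definition is_dual_submodule (N : set co_space) : Prop :=
  [/\ N `<=` dual, N dual_zero,
      (forall chi psi, N chi -> N psi -> N (dual_add chi psi)) &
      (forall (r : R) chi, N chi -> N (dual_scale r chi))].

Definition dual_nss : Prop :=
  exists U : set co_space,
    within dual (nbhs dual_zero) U /\
    (forall N : set co_space, is_dual_submodule N -> N `<=` U -> N = [set dual_zero]).

End Dual.

(* Main.v *)
Require Import Defs.
From HB Require Import structures.
From mathcomp Require Import all_boot all_order all_algebra.
From mathcomp Require Import boolp classical_sets functions reals topology Rstruct.
From mathcomp Require Import trigo normedtype ring lra.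
Import Order.TTheory GRing.Theory Num.Theory numFieldTopology.Exports.

Module Aux.
Local Open Scope classical_set_scope.
Local Open Scope ring_scope.


Definition isZ (t : RR) := exists k : int, t = k%:~R.

Lemma isZ_int (k : int) : isZ k%:~R. Proof. by exists k. Qed.
Lemma isZ0 : isZ 0. Proof. by exists 0; rewrite mulr0z. Qed.
Lemma isZD s t : isZ s -> isZ t -> isZ (s + t).
Proof. by move=> [k ->] [l ->]; exists (k + l); rewrite intrD. Qed.
Lemma isZN s : isZ s -> isZ (- s).
Proof. by move=> [k ->]; exists (- k); rewrite intrN. Qed.
Lemma isZB s t : isZ s -> isZ t -> isZ (s - t).
Proof. by move=> hs ht; apply: isZD => //; apply: isZN. Qed.
Lemma isZMz (q : int) t : isZ t -> isZ (q%:~R * t).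
Proof. by move=> [k ->]; exists (q * k); rewrite intrM. Qed.
Lemma isZ_eq s t : s = t -> isZ s -> isZ t. Proof. by move=> ->. Qed.

Definition ee (t : RR) : RR * RR := (cos (pi *+ 2 * t), sin (pi *+ 2 * t)).

Lemma cmul1 z : cmul z (1, 0) = z.
Proof. by case: z => x y; rewrite /cmul /=; congr pair; ring. Qed.

Lemma eeD s t : ee (s + t) = cmul (ee s) (ee t).
Proof. by rewrite /ee /cmul /= mulrDr cosD sinD; congr pair; ring. Qed.

Lemma ee0 : ee 0 = (1, 0).
Proof. by rewrite /ee mulr0 cos0 sin0. Qed.

Lemma ee1 : ee 1 = (1, 0).
Proof. by rewrite /ee mulr1 cos2pi sin2pi. Qed.

Lemma ee_nat (n : nat) : ee n%:R = (1, 0).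
Proof.
elim: n => [|n IH]; first by rewrite ee0.
by rewrite -addn1 natrD eeD IH ee1 cmul1.
Qed.

Lemma eeN1 t : ee t = (1, 0) -> ee (- t) = (1, 0).
Proof.
move=> h; have := eeD (- t) t; rewrite addNr ee0 h cmul1 => <-; done.
Qed.

Lemma ee_int (k : int) : ee k%:~R = (1, 0).
Proof.
case: k => n; first exact: ee_nat.
by rewrite NegzE intrN; apply: eeN1; exact: ee_nat.
Qed.

Lemma ee_isZ t : isZ t -> ee t = (1, 0).
Proof. by move=> [k ->]; exact: ee_int. Qed.

Lemma ee_cong s t : isZ (s - t) -> ee s = ee t.
Proof.
move=> h; have -> : s = t + (s - t) by ring.
by rewrite eeD (ee_isZ _ h) cmul1.
Qed.

Lemma ee_circle t : circle (ee t).
Proof. by rewrite /circle /ee /= cos2Dsin2. Qed.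

Lemma ee_inv_ne (n : nat) : (2 <= n)%N -> ee (n%:R^-1) <> (1, 0).
Proof.
move=> n2 [] hc _.
have n0 : (0 : RR) < n%:R by rewrite ltr0n (leq_trans _ n2).
pose x : RR := pi / n%:R.
have hx : pi *+ 2 * n%:R^-1 = x *+ 2 by rewrite /x mulr2n mulrDl -mulr2n.
move: hc; rewrite hx cos_mulr2n cos2sin2 => hc.
have : sin x ^+ 2 = 0 by lra.
move/eqP; rewrite expf_eq0 /= => /eqP; apply/eqP.
have xpos : 0 < x by rewrite /x divr_gt0 // pi_gt0.
have xle : x <= pi / 2.
  rewrite /x; apply: ler_wpM2l; first exact: pi_ge0.
  rewrite lef_pV2 ?posrE // ?ltr0n //.
  by rewrite (ler_nat RR 2 n).
have [xlt|xeq] := ltP x (pi / 2).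
  by rewrite gt_eqF // sin_gt0_pihalf // xpos xlt.
have -> : x = pi / 2 by apply/eqP; rewrite eq_le xle xeq.
by rewrite sin_pihalf oner_eq0.
Qed.
Arguments isZD {s t}.
Arguments isZN {s}.
Arguments isZB {s t}.
Arguments isZMz q {t}.
Arguments isZ_eq {s} t.


Section Ext.
Variables (M : zmodType) (M1 : set M).
Hypothesis M10 : M1 0.
Hypothesis M1B : forall x y, M1 x -> M1 y -> M1 (x - y).

Definition pregood (G : set (M * RR)) :=
 [/\ (forall h, M1 h -> exists t, G (h, t)),
     (forall x y s t, G (x, s) -> G (y, t) -> exists u, G (x - y, u)),
     (forall x y s t u, G (x, s) -> G (y, t) -> G (x + y, u) -> isZ (u - s - t)) &
     (forall h t, M1 h -> G (h, t) -> isZ t)].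

Definition dom (G : set (M * RR)) x := exists t, G (x, t).

Section PG.
Variable G : set (M * RR).
Hypothesis hG : pregood G.

Lemma pg_D1 {h} : M1 h -> dom G h.
Proof. by case: hG => D1 _ _ _; exact: D1. Qed.

Lemma pg_T {h t} : M1 h -> G (h, t) -> isZ t.
Proof. by case: hG => _ _ _ T; exact: T. Qed.

Lemma pg_dom0 : dom G 0.
Proof. by case: hG => D1 _ _ _; exact: D1. Qed.

Lemma pg_val0 {t} : G (0, t) -> isZ t.
Proof. by case: hG => _ _ _ T; exact: T. Qed.

Lemma pg_uniq {x s s'} : G (x, s) -> G (x, s') -> isZ (s' - s).
Proof.
case: hG => _ _ A _ hs hs'.
have [t0 h0] := pg_dom0.
have := A x 0 s t0 s' hs h0; rewrite addr0 => /(_ hs') h.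
have := isZD h (pg_val0 h0); apply: isZ_eq; ring.
Qed.

Lemma pg_domB {x y} : dom G x -> dom G y -> dom G (x - y).
Proof. by case: hG => _ D2 _ _ [s hs] [t ht]; exact: D2 hs ht. Qed.

Lemma pg_domN {x} : dom G x -> dom G (- x).
Proof. by move=> hx; have := pg_domB pg_dom0 hx; rewrite sub0r. Qed.

Lemma pg_domD {x y} : dom G x -> dom G y -> dom G (x + y).
Proof. by move=> hx hy; have := pg_domB hx (pg_domN hy); rewrite opprK. Qed.

Lemma pg_A {x y s t u} : G (x, s) -> G (y, t) -> G (x + y, u) -> isZ (u - s - t).
Proof. by case: hG => _ _ A _; exact: A. Qed.

Lemma pg_natmul y s (n : nat) : G (y, s) ->
  dom G (y *+ n) /\ forall c, G (y *+ n, c) -> isZ (c - n%:R * s).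
Proof.
move=> hs; elim: n => [|n [dn IH]].
  split; first by rewrite mulr0n; exact: pg_dom0.
  by move=> c; rewrite mulr0n mul0r subr0; exact: pg_val0.
have dS : dom G (y *+ n.+1) by rewrite mulrS addrC; apply: pg_domD => //; exists s.
split=> // c hc; case: dn => c' hc'.
have := pg_A hc' hs; rewrite -mulrSr => /(_ _ hc) h1.
have := isZD h1 (IH _ hc'); apply: isZ_eq; rewrite mulrS; ring.
Qed.

Lemma pg_intmul y s (q : int) : G (y, s) ->
  dom G (y *~ q) /\ forall c, G (y *~ q, c) -> isZ (c - q%:~R * s).
Proof.
move=> hs; case: q => n; first exact: pg_natmul.
have [dn IH] := pg_natmul _ _ n.+1 hs.
rewrite NegzE mulrNz; split; first exact: pg_domN.
move=> c hc; case: dn => c' hc'; case: pg_dom0 => t0 h0.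
have h0' : G (y *+ n.+1 + - (y *+ n.+1), t0) by rewrite addrN.
have h1 := pg_A hc' hc h0'.
have := isZB (isZB (pg_val0 h0) h1) (IH _ hc'); apply: isZ_eq.
rewrite intrN; ring.
Qed.

End PG.

Arguments pg_dom0 {G} hG.
Arguments pg_D1 {G} hG {h}.
Arguments pg_T {G} hG {h t}.
Arguments pg_val0 {G} hG {t}.
Arguments pg_uniq {G} hG {x s s'}.
Arguments pg_domB {G} hG {x y}.
Arguments pg_domN {G} hG {x}.
Arguments pg_domD {G} hG {x y}.
Arguments pg_A {G} hG {x y s t u}.
Arguments pg_natmul {G} hG y s n.
Arguments pg_intmul {G} hG y s q.

Definition ext (G : set (M * RR)) (x : M) (w : RR) : set (M * RR) :=
  fun p => exists d s (k : int),
    [/\ G (d, s), p.1 = d + x *~ k & p.2 = s + k%:~R * w].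

Section Extension.
Variables (G : set (M * RR)) (x : M) (w : RR).
Hypothesis hG : pregood G.
Hypothesis hW : forall (j : int) c, G (x *~ j, c) -> isZ (c - j%:~R * w).

Lemma ext_K {d s d' s'} {j : int} : G (d, s) -> G (d', s') -> d' = d + x *~ j ->
  isZ (s' - s - j%:~R * w).
Proof.
move=> hs hs' e.
have [c hc] : dom G (x *~ j).
  have -> : x *~ j = d' - d by rewrite e addrAC subrr add0r.
  by apply: (pg_domB hG); [exists s' | exists s].
rewrite e in hs'; have h1 := pg_A hG hs hc hs'.
have := isZD h1 (hW _ _ hc); apply: isZ_eq; ring.
Qed.

Lemma ext_sub : G `<=` ext G x w.
Proof.
case=> y t hy; exists y, t, 0; split => //=; first by rewrite mulr0z addr0.
by rewrite mul0r addr0.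
Qed.

Lemma ext_cong {y u t} : ext G x w (y, u) -> G (y, t) -> isZ (u - t).
Proof.
move=> [d [s [k [hs /= e1 e2]]]] ht.
have := isZN (ext_K hs ht e1); apply: isZ_eq; rewrite e2; ring.
Qed.

Lemma ext_pregood : pregood (ext G x w).
Proof.
split.
- by move=> h /(pg_D1 hG) [t ht]; exists t; apply: ext_sub.
- move=> y1 y2 u1 u2 [d1 [s1 [k1 [h1 /= e1 _]]]] [d2 [s2 [k2 [h2 /= e2 _]]]].
  have [v hv] := pg_domB hG (ex_intro _ _ h1) (ex_intro _ _ h2).
  exists (v + (k1 - k2)%:~R * w), (d1 - d2), v, (k1 - k2); split => //=.
  by rewrite e1 e2 mulrzBr; rewrite !opprD !addrA; congr (_ + _); rewrite addrAC.
- move=> y1 y2 u1 u2 u3 [d1 [s1 [k1 [h1 /= e1 f1]]]] [d2 [s2 [k2 [h2 /= e2 f2]]]]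
    [d3 [s3 [k3 [h3 /= e3 f3]]]].
  have [v hv] := pg_domD hG (ex_intro _ _ h1) (ex_intro _ _ h2).
  have hK := ext_K hv h3 (j := k1 + k2 - k3) _.
  have eq3 : d3 = d1 + d2 + x *~ (k1 + k2 - k3).
    move: e3; rewrite e1 e2 mulrzBr mulrzDr => e3.
    apply: (addIr (x *~ k3)); rewrite -e3.
    by rewrite -(addrA _ _ (x *~ k3)) addrNK addrACA.
  have hA := pg_A hG h1 h2 hv.
  have := isZD (hK eq3) hA; apply: isZ_eq.
  rewrite f1 f2 f3 !intrD intrN; ring.
- move=> h u hh hu.
  have [t ht] := pg_D1 hG hh.
  have := isZD (ext_cong hu ht) (pg_T hG hh ht); apply: isZ_eq; ring.
Qed.

Lemma ext_x : G (0, 0) -> ext G x w (x, w).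
Proof.
move=> h0; exists 0, 0, 1; split => //=; first by rewrite add0r.
by rewrite add0r mul1r.
Qed.

End Extension.

Definition hWp (G : set (M * RR)) x w :=
  forall (j : int) c, G (x *~ j, c) -> isZ (c - j%:~R * w).

Lemma choose_w (G : set (M * RR)) x : pregood G -> ~ dom G x ->
  (forall w, hWp G x w) \/
  (exists n : nat, (0 < n)%N /\ exists c, G (x *+ n, c) /\
      forall w, isZ (n%:R * w - c) -> hWp G x w).
Proof.
move=> hG hx.
have [ex|nex] := pselect (exists n, (0 < n)%N /\ dom G (x *+ n)); last first.
  left=> w j c hc.
  case: j hc => n hc.
    case: n hc => [|n] hc.
      by have := pg_val0 hG hc; apply: isZ_eq; rewrite mul0r subr0.
    by exfalso; apply: nex; exists n.+1; split => //; exists c.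
  exfalso; apply: nex; exists n.+1; split => //.
  by move: (pg_domN hG (ex_intro _ c hc)); rewrite NegzE mulrNz opprK.
right.
have exP : exists n, (0 < n)%N && `[< dom G (x *+ n) >].
  by case: ex => n [n0 d]; exists n; rewrite n0; apply/asboolP.
case: (find_ex_minn exP) => n /andP [n0 /asboolP [c hc]] nmin.
exists n; split => //; exists c; split => // w hw j c' hc'.
have n0' : (0 < n%:Z)%R by rewrite ltz_nat.
set q := (j %/ n)%Z; set r := (j %% n)%Z.
have [dq IHq] := pg_intmul hG (x *+ n) c q hc.
have ej : x *~ j = (x *+ n) *~ q + x *~ r.
  by rewrite {1}(divz_eq j n) mulrzDr mulrzA mulrzAC.
have r0 : r = 0.
  have rge : (0 <= r)%R by apply: modz_ge0; rewrite gt_eqF.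
  have rlt : (r < n)%R by exact: ltz_pmod.
  case: r rge rlt ej => // -[|rr] // _ rlt ej; exfalso.
  have : dom G (x *~ (Posz rr.+1)).
    have -> : x *~ (Posz rr.+1) = x *~ j - (x *+ n) *~ q by rewrite ej addrAC subrr add0r.
    by apply: (pg_domB hG) => //; exists c'.
  move=> drr; have : (n <= rr.+1)%N by apply: nmin; apply/andP; split => //; apply/asboolP.
  by rewrite leqNgt -ltz_nat rlt.
rewrite ej r0 mulr0z addr0 in hc'.
have := isZB (IHq _ hc') (isZMz q hw); apply: isZ_eq.
rewrite [in X in _ = X](divz_eq j n) -/q -/r r0 addr0 intrM; ring.
Qed.

End Ext.

Arguments pregood {M} M1 G.
Arguments dom {M} G x.
Arguments ext {M} G x w.
Arguments hWp {M} G x w.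
Arguments ext_pregood {M M1} M10 {G x w} hG hW.
Arguments ext_cong {M M1 G x w} hG hW {y u t}.
Arguments ext_sub {M G x w} t _.
Arguments choose_w {M M1} M10 {G x} _ _.
Arguments pg_uniq {M M1} M10 {G} hG {x s s'}.
Arguments pg_dom0 {M M1} M10 {G} hG.

Section Char.
Variables (M : zmodType) (M1 : set M).
Hypothesis M10 : M1 0.
Hypothesis M1B : forall x y, M1 x -> M1 y -> M1 (x - y).
Variable a : M.
Hypothesis Ma : ~ M1 a.

Definition good (G : set (M * RR)) :=
  [/\ pregood M1 G, dom G a & forall t, G (a, t) -> ee t <> (1, 0)].

Lemma ext_dom G x w : pregood M1 G -> dom (ext G x w) x.
Proof.
move=> hG; case: (pg_dom0 M10 hG) => s0 h0; exists (s0 + w), 0, s0, 1; split => //=.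
  by rewrite add0r.
by rewrite mul1r.
Qed.

Lemma ext_good G x : good G -> ~ dom G x -> exists w, good (ext G x w).
Proof.
move=> [hG [ta hta] hN] hx.
have hw : exists w, hWp G x w.
  case: (choose_w M10 hG hx) => [h|[n [n0 [c [hc h]]]]]; first by exists 0.
  exists (c / n%:R); apply: h; apply: isZ_eq isZ0.
  by rewrite mulrC divfK ?subrr // pnatr_eq0 -lt0n.
case: hw => w hw; exists w; split.
- by have := ext_pregood M10 hG hw.
- by exists ta; apply: ext_sub.
- move=> t ht; have := ext_cong hG hw ht hta => /ee_cong ->; exact: hN.
Qed.

Definition Gb : set (M * RR) := [set p | M1 p.1 /\ p.2 = 0].

Lemma Gb_pregood : pregood M1 Gb.
Proof.
split.
- by move=> h hh; exists 0.
- by move=> x y s t [hx _] [hy _]; exists 0; split => //=; exact: M1B.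
- by move=> x y s t u [_ /= ->] [_ /= ->] [_ /= ->]; rewrite !subr0; exact: isZ0.
- by move=> h t _ [_ /= ->]; exact: isZ0.
Qed.

Lemma G0_exists : exists G0, good G0.
Proof.
have hx : ~ dom Gb a by move=> [t [/= h _]].
have [w [hw hne]] : exists w, hWp Gb a w /\ ee w <> (1, 0).
  case: (choose_w M10 Gb_pregood hx) => [h|[n [n0 [c [[/= hMn c0] h]]]]].
    by exists (2%:R^-1); split; [exact: h | exact: ee_inv_ne].
  exists (n%:R^-1); split.
    apply: h; rewrite c0 subr0 mulfV ?pnatr_eq0 -?lt0n //.
    by exists 1; rewrite mulr1z.
  apply: ee_inv_ne.
  case: n n0 h c0 hMn => [|[|n]] //= _ _ _.
exists (ext Gb a w); split.
- by have := ext_pregood M10 Gb_pregood hw.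
- by have := ext_dom Gb a w Gb_pregood.
- move=> t ht.
  have hp := ext_pregood M10 Gb_pregood hw.
  have haw : ext Gb a w (a, w).
    exists 0, 0, 1; split => /=; first by split => //; exact: M10.
      by rewrite add0r.
    by rewrite add0r mul1r.
  by rewrite (ee_cong _ _ (pg_uniq M10 hp haw ht)).
Qed.


Lemma chain_good (F : set (set (M * RR))) : F `<=` good -> total_on F subset ->
  (exists X, F X) -> good (\bigcup_(X in F) X).
Proof.
move=> Fg tot [X0 FX0].
have two X Y : F X -> F Y -> exists Z, [/\ F Z, X `<=` Z & Y `<=` Z].
  move=> FX FY; case: (tot X Y FX FY) => h; first by exists Y; split.
  by exists X; split.
have [[D1 D2 A T] d0 N0] := Fg _ FX0.
split; [split| |].
- move=> h /D1 [t ht]; exists t; exists X0 => //.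
- move=> x y s t [X FX hx] [Y FY hy].
  have [Z [FZ XZ YZ]] := two X Y FX FY.
  have [[_ D2' _ _] _ _] := Fg _ FZ.
  have [u hu] := D2' _ _ _ _ (XZ _ hx) (YZ _ hy).
  by exists u; exists Z.
- move=> x y s t u [X FX hx] [Y FY hy] [W FW hw].
  have [Z [FZ XZ YZ]] := two X Y FX FY.
  have [Z' [FZ' ZZ' WZ']] := two Z W FZ FW.
  have [[_ _ A' _] _ _] := Fg _ FZ'.
  by apply: (A' _ _ _ _ _ (ZZ' _ (XZ _ hx)) (ZZ' _ (YZ _ hy)) (WZ' _ hw)).
- move=> h t hh [X FX hx].
  have [[_ _ _ T'] _ _] := Fg _ FX.
  exact: T' hh hx.
- by case: d0 => t ht; exists t; exists X0.
- move=> t [X FX hx].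
  have [_ _ N'] := Fg _ FX.
  exact: N' hx.
Qed.

Lemma char_graph : exists G, good G /\ forall y, dom G y.
Proof.
have [G0 g0] := G0_exists.
pose P := fun G : set (M * RR) => G = set0 \/ (G0 `<=` G /\ good G).
have [A [PA Amax]] : exists A, P A /\ forall B, A `<` B -> ~ P B.
  apply: Zorn_bigcup => F FP tot.
  have [ne|nne] := pselect (exists X, F X /\ X <> set0); last first.
    left; apply/seteqP; split => // p [X FX Xp]; exfalso; apply: nne.
    by exists X; split => // X0; rewrite X0 in Xp.
  right.
  have e : \bigcup_(X in F) X = \bigcup_(X in [set X | F X /\ X <> set0]) X.
    apply/seteqP; split => p [X FX Xp]; last by exists X => //; case: FX.
    exists X => //; split => // X0; by rewrite X0 in Xp.
  have FPg : forall X, F X -> X <> set0 -> G0 `<=` X /\ good X.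
    by move=> X FX X0; case: (FP _ FX).
  case: ne => X1 [FX1 X10].
  split.
    by move=> p hp; exists X1 => //; apply: (proj1 (FPg _ FX1 X10)).
  rewrite e; apply: chain_good.
  - by move=> X [FX X0]; exact: (proj2 (FPg _ FX X0)).
  - by move=> X Y [FX _] [FY _]; exact: tot.
  - by exists X1.
case: PA => [A0|[G0A gA]].
  exfalso; apply: (Amax G0); last by right; split.
  rewrite A0; split; first by [].
  move=> h; case: g0 => _ [t ht] _.
  by have := h _ ht.
exists A; split => // y; apply: contrapT => ny.
have [w gw] := ext_good A y gA ny.
apply: (Amax (ext A y w)); last first.
  right; split => //; apply: subset_trans G0A _; apply: ext_sub.
split; first by apply: ext_sub.
move=> sub; apply: ny.
have [u hu] := ext_dom A y w (let: And3 p _ _ := gA in p).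
by exists u; apply: sub.
Qed.

Lemma char_exists : exists chi : M -> RR * RR,
  [/\ forall m, circle (chi m), forall x y, chi (x + y) = cmul (chi x) (chi y),
      forall h, M1 h -> chi h = (1, 0) & chi a <> (1, 0)].
Proof.
have [G [[hG da N] dall]] := char_graph.
pose phi m := [get t | G (m, t)].
have hphi m : G (m, phi m) by exact: (@getPex _ (fun t => G (m, t)) (dall m)).
exists (fun m => ee (phi m)); split.
- move=> m; exact: ee_circle.
- move=> x y; rewrite -eeD; apply: ee_cong.
  have := @pg_A M M1 G hG _ _ _ _ _ (hphi x) (hphi y) (hphi (x + y)); apply: isZ_eq; ring.
- by move=> h hh; apply: ee_isZ; exact: (@pg_T M M1 G hG _ _ hh (hphi h)).
- exact: N.
Qed.

End Char.


Lemma gen_min (R : pzRingType) (M : lmodType R) (K P : set M) :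
  is_submodule P -> K `<=` P -> generated_submodule K `<=` P.
Proof. by move=> hP KP x; apply; split. Qed.

Lemma gen_sub (R : pzRingType) (M : lmodType R) (K : set M) :
  K `<=` generated_submodule K.
Proof. by move=> x Kx N [_ KN]; exact: KN. Qed.

Lemma gen_is_sub (R : pzRingType) (M : lmodType R) (K : set M) :
  is_submodule (generated_submodule K).
Proof.
split.
- by move=> N [[]].
- by move=> x y hx hy N hN; case: (hN) => [[_ hD _] _]; apply: hD; [exact: hx | exact: hy].
- by move=> r x hx N hN; case: (hN) => [[_ _ hZ] _]; apply: hZ; exact: hx.
Qed.

Lemma circle_idem z : circle z -> z = cmul z z -> z = (1, 0).
Proof.
case: z => a b; rewrite /circle /cmul /= => hc [ha hb].
have b0 : b = 0.
  apply: contrapT => /eqP bn0.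
  have a2 : a = 2^-1.
    have : b * (1 - 2 * a) = 0 by rewrite mulrBr mulr1; lra.
    move/eqP; rewrite mulf_eq0 (negbTE bn0) /= subr_eq0 => /eqP h.
    lra.
  by rewrite a2 in ha hc; nra.
rewrite b0 in ha hc *; congr pair; nra.
Qed.

Lemma doubling_bound (x : nat -> RR) : (forall n, 2^-1 < x n) -> (forall n, x n <= 1) ->
  (forall n, x n.+1 = 2 * x n ^+ 2 - 1) -> x 0%N = 1.
Proof.
move=> hgt hle hrec.
pose d := 1 - x 0%N.
have d0 : 0 <= d by rewrite /d subr_ge0.
have claim n : n.+1%:R * d <= 1 - x n.
  elim: n => [|n IH]; first by rewrite mul1r.
  rewrite hrec -natr1.
  have h1 := hgt n; have h2 := hle n.
  have h3 : d <= 1 - x n.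
    apply: le_trans IH; rewrite ler_peMl // ler1n //.
  have h4 : 0 <= n.+1%:R * d by apply: mulr_ge0.
  nra.
apply/eqP; rewrite eq_le hle /=; rewrite -subr_le0 -/d.
rewrite leNgt; apply/negP => dpos.
pose n := Num.trunc (d^-1).
have hn : d^-1 < n.+1%:R by exact: truncnS_gt.
have := claim n; have := hgt n.
have : 1 < n.+1%:R * d.
  by rewrite -ltr_pdivrMr // div1r.
lra.
Qed.

Lemma open_O : open [set z : RR * RR | 2^-1 < z.1].
Proof.
apply: (@open_comp _ _ fst [set x : RR | 2^-1 < x]); last exact: open_gt.
move=> z _; exact: cvg_fst.
Qed.

Section Dir1.
Variables (R : pzRingType) (M : topLmodType R).

Lemma dual_iter (N : set (co_space M)) psi : is_dual_submodule N -> N psi ->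
  forall n, N (iter n (fun g => dual_add g g) psi).
Proof.
move=> [_ _ hadd _] hpsi; elim => [|n IH] //=; exact: hadd.
Qed.

Lemma dir1 : compactly_generated M -> dual_nss M.
Proof.
move=> [K [cK gK]].
pose O := [set z : RR * RR | 2^-1 < z.1].
pose U := [set g : co_space M | g @` K `<=` O].
have oU : open U by exact: compact_open_open cK open_O.
have U0 : U (@dual_zero R M).
  move=> z [k _ <-]; rewrite /O /dual_zero /=; lra.
exists U; split.
  have : nbhs (@dual_zero R M) U by apply: open_nbhs_nbhs; split.
  by apply: filterS => g Ug _.
move=> N hN NU.
have [Ndual N0 Nadd Nscale] := hN.
have key psi : N psi -> forall k, K k -> psi k = (1, 0).
  move=> Npsi k Kk.
  pose f n := iter n (fun g => dual_add g g) psi.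
  have Nf n : N (f n) by exact: dual_iter.
  have circ n : circle (f n k) by have [_ hc _] := Ndual _ (Nf n); exact: hc.
  have x1 : (psi k).1 = 1.
    have := @doubling_bound (fun n => (f n k).1).
    apply.
    - by move=> n; apply: (NU _ (Nf n)); exists k.
    - move=> n; have := circ n; rewrite /circle; case: (f n k) => a b /= h; nra.
    - move=> n; have := circ n; rewrite /circle /= /dual_add /cmul /=.
      case: (f n k) => a b /= h; nra.
  have := Ndual _ Npsi => -[_ hc _]; have := hc k; rewrite /circle.
  case: (psi k) x1 => a b /= -> h; congr pair; nra.
move=> {U0 oU}; apply/seteqP; split; last by move=> _ ->.
move=> chi Nchi.
have [_ hcirc hmul] := Ndual _ Nchi.
pose P := [set m | forall r : R, chi (r *: m) = (1, 0)].
have hP : is_submodule P.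
  split.
  - move=> r; rewrite scaler0; apply: circle_idem => //.
    by rewrite -hmul addr0.
  - by move=> x y hx hy r; rewrite scalerDr hmul hx hy /cmul /=; congr pair; ring.
  - by move=> r x hx s; rewrite scalerA; exact: hx.
have KP : K `<=` P.
  move=> k Kk r; have := key _ (Nscale r _ Nchi) k Kk; done.
have all m : chi m = (1, 0).
  have : P m by apply: (@gen_min R M K P hP KP m); rewrite gK.
  by move=> /(_ 1); rewrite scale1r.
by apply: funext => m; rewrite all.
Qed.

End Dir1.

Section Dir2.
Variables (R : pzRingType) (M : topLmodType R).
Hypothesis hM : is_topological_module M.
Hypothesis lc : locally_compact [set: M].

Lemma subc (m : M) : (fun x => x - m) @ m --> (0 : M).
Proof.
case: hM => hadd hopp hsc.
have h1 : (fun x : M => (x, - m)) @ m --> (m, - m).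
  apply: cvg_pair; [exact: cvg_id | exact: cvg_cst].
have := cvg_comp _ _ h1 (hadd (m, - m)).
by rewrite /= subrr.
Qed.

Lemma locconst (V : set M) (chi : M -> RR * RR) : nbhs (0 : M) V ->
  (forall x y, chi (x + y) = cmul (chi x) (chi y)) ->
  (forall v, V v -> chi v = (1, 0)) -> continuous chi.
Proof.
move=> hV hmul hV1 m; apply: cvg_near_cst.
have : \forall x \near m, V (x - m) by exact: (subc m) hV.
apply: filterS => x hx.
have -> : x = m + (x - m) by rewrite addrC subrK.
by rewrite hmul (hV1 _ hx) cmul1.
Qed.

Lemma compact_nbhs0 : exists V : set M, compact V /\ nbhs (0 : M) V.
Proof.
have [V] := lc (0 : M) I; rewrite withinET => V0 [cV _].
by exists V.
Qed.

Lemma cmul_circle z w : circle z -> circle w -> circle (cmul z w).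
Proof.
case: z => a b; case: w => c d; rewrite /circle /cmul /= => h1 h2.
have -> : (a * c - b * d) ^+ 2 + (a * d + b * c) ^+ 2 =
  (a ^+ 2 + b ^+ 2) * (c ^+ 2 + d ^+ 2) by ring.
by rewrite h1 h2 mulr1.
Qed.

Lemma cmulACA z w u v : cmul (cmul z w) (cmul u v) = cmul (cmul z u) (cmul w v).
Proof.
case: z => a b; case: w => c d; case: u => e f; case: v => g h.
rewrite /cmul /=; congr pair; ring.
Qed.

Lemma dir2 : dual_nss M -> compactly_generated M.
Proof.
move=> [U [hU hN]].
have [V [cV V0]] := compact_nbhs0.
pose B (C : set M) : set (co_space M) :=
  [set g | dual g /\ g @` C `<=` [set (1, 0)]].
pose Fl := filter_from [set C : set M | compact C] B.
have FF : Filter Fl.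
  apply: filter_from_filter; first by exists set0; exact: compact0.
  move=> C1 C2 c1 c2; exists (C1 `|` C2); first exact: compactU.
  move=> g [dg hg]; split; split => // z [k hk <-]; apply: hg; exists k => //.
    by left.
  by right.
have cv : Fl --> (@dual_zero R M).
  apply/compact_open_cvgP => K O cK oO h0.
  exists K => // g [dg hg] z [k Kk <-].
  have -> : g k = (1, 0) by apply: hg; exists k.
  by apply: h0; exists k.
have [C cC hC] : Fl [set x | dual x -> U x] := cv _ hU.
pose K := C `|` V.
exists K; split; first exact: compactU.
pose M1 := generated_submodule K.
have M1sub : is_submodule M1 := @gen_is_sub R M K.
have [M10 M1D M1Z] := M1sub.
have M1B x y : M1 x -> M1 y -> M1 (x - y).
  by move=> hx hy; apply: M1D => //; rewrite -scaleN1r; apply: M1Z.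
apply/seteqP; split => // m _; apply: contrapT => nm.
have [chi [hc hmul htriv ha]] := @char_exists _ M1 M10 M1B m nm.
have KM1 : K `<=` M1 := @gen_sub R M K.
pose N := [set psi : co_space M | [/\ forall m, circle (psi m),
  forall x y, psi (x + y) = cmul (psi x) (psi y) &
  forall h, M1 h -> psi h = (1, 0)]].
have Nd : N `<=` @dual R M.
  move=> psi [h1 h2 h3]; split => //.
  apply: (@locconst V psi V0 h2) => v Vv; apply: h3; apply: KM1; by right.
have Nsub : is_dual_submodule N.
  split => //.
  - split.
    + by move=> z; rewrite /circle /dual_zero /=; ring.
    + by move=> x y; rewrite /dual_zero /cmul /=; congr pair; ring.
    + by [].
  - move=> psi phi [p1 p2 p3] [f1 f2 f3]; split.
    + by move=> x; rewrite /dual_add; exact: cmul_circle.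
    + by move=> x y; rewrite /dual_add p2 f2 cmulACA.
    + by move=> h hh; rewrite /dual_add p3 // f3 // /cmul /=; congr pair; ring.
  - move=> r psi [p1 p2 p3]; split.
    + by move=> x; rewrite /dual_scale.
    + by move=> x y; rewrite /dual_scale scalerDr p2.
    + by move=> h hh; rewrite /dual_scale p3 //; exact: M1Z.
have NU : N `<=` U.
  move=> psi Npsi; apply: hC; last exact: Nd.
  split; first exact: Nd.
  move=> z [k Ck <-]; case: Npsi => _ _ p3; apply: p3; apply: KM1; by left.
have := hN N Nsub NU.
have Nchi : N (chi : co_space M) by split.
move=> eN; rewrite eN in Nchi.
by apply: ha; rewrite Nchi.
Qed.

End Dir2.

End Aux.

Theorem mainTheorem4 (Sigma : set nat) (HSigma : forall p, Sigma p -> prime p)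
  (M : topLmodType (ZS Sigma)) :
  is_topological_module M ->
  hausdorff_space M ->
  locally_compact [set: M] ->
  (compactly_generated M <-> dual_nss M).
Proof.
move=> hM _ lc; split; [exact: Aux.dir1 | exact: Aux.dir2 hM lc].
Qed.
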